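(* Consider the fully discrete scheme described in the context (the time discretization of the extended Cahn–Hilliard-type model on a rectangular grid). Assume $h_3\equiv 0$, i.e. no flux is pumped into the system. Then any solution of the scheme satisfies the discrete volume conservation law $$(\psi\tilde\phi^{n+1},1)=(\psi\tilde\phi^{n},1)=(\psi\tilde\phi^{0},1),\qquad n=1,2,\dots,$$ where $(u,v)=\Delta x\,\Delta y\sum_{i=1}^{N_x}\sum_{j=1}^{N_y}u_{i,j}v_{i,j}$.
   Context: Domain and grid: $\Omega=[-\tfrac12L_x,\tfrac12L_x]\times[-\tfrac12L_y,\tfrac12L_y]$ is divided into $N_x\times N_y$ uniform cells with $\Delta x=L_x/N_x$, $\Delta y=L_y/N_y$; grid functions $u_{i,j}$ live at cell centers $i=1,\dots,N_x$, $j=1,\dots,N_y$, with ghost indices $i=0,N_x+1$, $j=0,N_y+1$. For a cell-centered $u$ define face quantities $(A_xu)_{i+\frac12,j}=\tfrac12(u_{i+1,j}+u_{i,j})$, $(D_xu)_{i+\frac12,j}=(u_{i+1,j}-u_{i,j})/\Delta x$ ($i=0,\dots,N_x$), and analogously $(A_yu)_{i,j+\frac12}$, $(D_yu)_{i,j+\frac12}$; for a face function $w$, $(D_xw)_{i,j}=(w_{i+\frac12,j}-w_{i-\frac12,j})/\Delta x$, $(D_yw)_{i,j}=(w_{i,j+\frac12}-w_{i,j-\frac12})/\Delta y$. Set $D_h(a,u)_{i,j}=D_x(A_xa\,D_xu)_{i,j}+D_y(A_ya\,D_yu)_{i,j}$. Given data: a grid function $\psi>0$ (discrete approximation of the characteristic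 function of the original domain $\Omega_1\subset\Omega$) with $\chi=1/\psi$; constants $K>0$, $\alpha\ge0$, $\Gamma>0$, $\Delta t>0$; a positive mobility grid function $\bar M^{n+\frac12}$; time-independent grid functions $h_1,h_2,h_3$; $g(\phi)=f'(\phi)/\sqrt{2f(\phi)+2A}$ for a bulk potential $f$ and constant $A$ with $2f+2A>0$, and $\bar g^{n+\frac12}_{i,j}$ denotes $g$ evaluated at the extrapolation $\tfrac32\tilde\phi^n_{i,j}-\tfrac12\tilde\phi^{n-1}_{i,j}$ ($n\ge1$), or at $\tilde\phi^0_{i,j}$ ($n=0$). Notation $u^{n+\frac12}=\tfrac12(u^{n+1}+u^n)$. For a cell-centered $w$ define $\mathcal B(w)_{i,j}=\tfrac12\big[|D_x\psi|_{i-\frac12,j}(A_xw)_{i-\frac12,j}+|D_x\psi|_{i+\frac12,j}(A_xw)_{i+\frac12,j}+|D_y\psi|_{i,j-\frac12}(A_yw)_{i,j-\frac12}+|D_y\psi|_{i,j+\frac12}(A_yw)_{i,j+\frac12}\big]$. The scheme: given $\tilde\phi^n,q^n$, find $\tilde\phi^{n+1},q^{n+1},\mu_*^{n+\frac12}$ with, at every cell $(i,j)$, (1) $\frac{\tilde\phi^{n+1}-\tilde\phi^n}{\Delta t}=\chi\,D_h(\psi\bar M^{n+\frac12},\chi\mu_*^{n+\frac12})-\chi\,\mathcal B(h_3)$; (2) $\mu_*^{n+\frac12}=\psi\,\bar g^{n+\frac12}q^{n+\frac12}-K\,D_h(\psi,\tilde\phi^{n+\frac12})+\mathcal B\big(\alpha(\tilde\phi^{n+\frac12}-h_1)-h_2+\Gamma^{-1}\frac{\tilde\phi^{n+1}-\tilde\phi^n}{\Delta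 t}\big)$; (3) $q^{n+1}-q^n=\bar g^{n+\frac12}(\tilde\phi^{n+1}-\tilde\phi^n)$. Boundary conditions (discrete homogeneous Neumann): the ghost values of $\tilde\phi^{n},\tilde\phi^{n+1}$, of $\psi$ (hence of $\chi$), and of $\mu_*^{n+\frac12}$ equal the adjacent interior values, e.g. $u_{0,j}=u_{1,j}$, $u_{N_x+1,j}=u_{N_x,j}$, $u_{i,0}=u_{i,1}$, $u_{i,N_y+1}=u_{i,N_y}$. *)

(* Defs.v *)
From HB Require Import structures.
From mathcomp Require Import all_boot all_order all_algebra.
From mathcomp Require Import all_classical all_reals all_analysis.
Set Implicit Arguments. Unset Strict Implicit. Unset Printing Implicit Defensive.
Import Order.TTheory GRing.Theory Num.Theory.
Local Open Scope ring_scope.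

Section Grid.
Variable R : realType.

(* A grid function: value at cell (i,j); meaningful indices are
   i = 0..Nx+1, j = 0..Ny+1 (0 and N+1 are ghost indices). *)
Definition grid := nat -> nat -> R.

(* Face functions: the x-face i+1/2 is stored at index i (i = 0..Nx),
   the y-face j+1/2 is stored at index j (j = 0..Ny). *)
Definition Ax (u : grid) : grid := fun i j => (u i.+1 j + u i j) / 2.
Definition Ay (u : grid) : grid := fun i j => (u i j.+1 + u i j) / 2.
Definition Dxf (dx : R) (u : grid) : grid := fun i j => (u i.+1 j - u i j) / dx.
Definition Dyf (dy : R) (u : grid) : grid := fun i j => (u i j.+1 - u i j) / dy.
(* face-to-cell differences, at cell (i,j) with i,j >= 1 *)
Definition Dxc (dx : R) (w : grid) : grid := fun i j => (w i j - w i.-1 j) / dx.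
Definition Dyc (dy : R) (w : grid) : grid := fun i j => (w i j - w i j.-1) / dy.

Definition Dh (dx dy : R) (a u : grid) : grid := fun i j =>
  Dxc dx (fun i j => Ax a i j * Dxf dx u i j) i j
  + Dyc dy (fun i j => Ay a i j * Dyf dy u i j) i j.

Definition Bop (dx dy : R) (psi w : grid) : grid := fun i j =>
  (`|Dxf dx psi i.-1 j| * Ax w i.-1 j + `|Dxf dx psi i j| * Ax w i j
   + `|Dyf dy psi i j.-1| * Ay w i j.-1 + `|Dyf dy psi i j| * Ay w i j) / 2.

Definition neumann (Nx Ny : nat) (u : grid) : Prop :=
  (forall j, u 0%N j = u 1%N j) /\ (forall j, u Nx.+1 j = u Nx j) /\
  (forall i, u i 0%N = u i 1%N) /\ (forall i, u i Ny.+1 = u i Ny).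

Definition ip (Nx Ny : nat) (dx dy : R) (u v : grid) : R :=
  dx * dy * \sum_(1 <= i < Nx.+1) \sum_(1 <= j < Ny.+1) u i j * v i j.

Definition gfun (f : R -> R) (A : R) (x : R) : R :=
  (derive1 f x) / Num.sqrt (2 * f x + 2 * A).

(* gbar^{n+1/2}: g at the extrapolation 3/2 phi^n - 1/2 phi^{n-1} (n>=1),
   or at phi^0 (n=0) *)
Definition gbar (f : R -> R) (A : R) (phi : nat -> grid) (n : nat) : grid :=
  fun i j => match n with
  | 0%N => gfun f A (phi 0%N i j)
  | m.+1 => gfun f A (3/2 * phi n i j - 1/2 * phi m i j)
  end.

End Grid.

(* Main.v *)
Require Import Defs.
From HB Require Import structures.
From mathcomp Require Import all_boot all_order all_algebra.
From mathcomp Require Import all_classical all_reals all_analysis.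
Import Order.TTheory GRing.Theory Num.Theory.
Local Open Scope ring_scope.


Lemma tele_sum (R : realType) (G : nat -> R) (N : nat) :
  \sum_(1 <= i < N.+1) (G i - G i.-1) = G N - G 0%N.
Proof.
elim: N => [|N IH]; first by rewrite big_geq // subrr.
rewrite big_nat_recr //= IH; by rewrite addrC addrA subrK.
Qed.

Lemma sum_Dh_zero (R : realType) (Nx Ny : nat) (dx dy : R) (a w : grid R) :
  neumann Nx Ny w ->
  \sum_(1 <= i < Nx.+1) \sum_(1 <= j < Ny.+1) Dh dx dy a w i j = 0.
Proof.
move=> [h0 [h1 [h2 h3]]].
rewrite /Dh.
under eq_bigr => i _ do rewrite big_split /=.
rewrite big_split /= exchange_big /=.
rewrite (eq_bigr (fun _ => 0)); last first.
  move=> j _; rewrite /Dxc -mulr_suml tele_sum /Dxf.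
  by rewrite h1 h0 !subrr !mul0r !mulr0 subrr mul0r.
rewrite big1_eq add0r; apply: big1 => i _.
rewrite /Dyc -mulr_suml tele_sum /Dyf.
by rewrite h3 h2 !subrr !mul0r !mulr0 subrr mul0r.
Qed.

Theorem theorem1 (R : realType) (Lx Ly : R) (Nx Ny : nat)
  (psi : grid R) (K alpha Gamma dt A : R) (f : R -> R)
  (Mbar : nat -> grid R) (h1 h2 h3 : grid R)
  (phi q mu : nat -> grid R) :
  0 < Lx -> 0 < Ly -> (0 < Nx)%N -> (0 < Ny)%N ->
  let dx := Lx / Nx%:R in
  let dy := Ly / Ny%:R in
  (forall i j, (i <= Nx.+1)%N -> (j <= Ny.+1)%N -> 0 < psi i j) ->
  let chi : grid R := fun i j => (psi i j)^-1 in
  0 < K -> 0 <= alpha -> 0 < Gamma -> 0 < dt ->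
  (forall x, derivable f x 1) ->
  (forall x, 0 < 2 * f x + 2 * A) ->
  (forall n i j, (i <= Nx.+1)%N -> (j <= Ny.+1)%N -> 0 < Mbar n i j) ->
  (* no flux pumped into the system *)
  (forall i j, h3 i j = 0) ->
  (* boundary conditions *)
  neumann Nx Ny psi ->
  (forall n, neumann Nx Ny (phi n)) ->
  (forall n, neumann Nx Ny (mu n)) ->
  (* the scheme, at every interior cell; mu n is mu_*^{n+1/2} *)
  (forall n i j, (1 <= i <= Nx)%N -> (1 <= j <= Ny)%N ->
     let g := gbar f A phi n in
     let phih : grid R := fun i j => (phi n.+1 i j + phi n i j) / 2 in
     let qh : grid R := fun i j => (q n.+1 i j + q n i j) / 2 in
     let dphi : grid R := fun i j => (phi n.+1 i j - phi n i j) / dt in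
     [/\ dphi i j =
           chi i j * Dh dx dy (fun i j => psi i j * Mbar n i j)
                              (fun i j => chi i j * mu n i j) i j
           - chi i j * Bop dx dy psi h3 i j,
         mu n i j =
           psi i j * g i j * qh i j - K * Dh dx dy psi phih i j
           + Bop dx dy psi (fun i j => alpha * (phih i j - h1 i j) - h2 i j
                                       + Gamma^-1 * dphi i j) i j
       & q n.+1 i j - q n i j = g i j * (phi n.+1 i j - phi n i j)]) ->
  forall n, (1 <= n)%N ->
    ip Nx Ny dx dy (fun i j => psi i j * phi n.+1 i j) (fun _ _ => 1) =
      ip Nx Ny dx dy (fun i j => psi i j * phi n i j) (fun _ _ => 1) /\
    ip Nx Ny dx dy (fun i j => psi i j * phi n i j) (fun _ _ => 1) =
      ip Nx Ny dx dy (fun i j => psi i j * phi 0%N i j) (fun _ _ => 1).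
Proof.
move=> Lx0 Ly0 Nx0 Ny0 dx dy Hpsi chi K0 al0 G0 dt0 Hf HfA HM Hh3 Npsi Nphi Nmu Hs.
have step : forall n, ip Nx Ny dx dy (fun i j => psi i j * phi n.+1 i j) (fun _ _ => 1) =
      ip Nx Ny dx dy (fun i j => psi i j * phi n i j) (fun _ _ => 1).
  move=> n; apply/eqP; rewrite -subr_eq0 /ip -mulrBr.
  rewrite -sumrB.
  have Nw : neumann Nx Ny (fun i j => chi i j * mu n i j).
    case: Npsi => [p0 [p1 [p2 p3]]]; case: (Nmu n) => [m0 [m1 [m2 m3]]].
    by rewrite /chi; split; [|split; [|split]] => k; rewrite ?p0 ?p1 ?p2 ?p3 ?m0 ?m1 ?m2 ?m3.
  have E : \sum_(1 <= i < Nx.+1) (\sum_(1 <= j < Ny.+1) psi i j * phi n.+1 i j * 1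
        - \sum_(1 <= j < Ny.+1) psi i j * phi n i j * 1)
      = dt * \sum_(1 <= i < Nx.+1) \sum_(1 <= j < Ny.+1)
          Dh dx dy (fun i j => psi i j * Mbar n i j) (fun i j => chi i j * mu n i j) i j.
    rewrite mulr_sumr; apply: eq_big_nat => i Hi; rewrite -sumrB mulr_sumr.
    apply: eq_big_nat => j Hj.
    have Hi' : (1 <= i <= Nx)%N by rewrite -ltnS.
    have Hj' : (1 <= j <= Ny)%N by rewrite -ltnS.
    have [e1 _ _] := Hs n i j Hi' Hj'.
    have hp : psi i j != 0.
      by rewrite gt_eqF // Hpsi //; [case/andP: Hi' => _ /leqW | case/andP: Hj' => _ /leqW].
    have hB : Bop dx dy psi h3 i j = 0 by rewrite /Bop /Ax /Ay !Hh3; rewrite !(mul0r, addr0, mulr0).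
    rewrite hB mulr0 subr0 in e1.
    have dtn : dt != 0 by rewrite gt_eqF.
    rewrite !mulr1 -mulrBr.
    rewrite -[phi n.+1 i j - phi n i j](divfK dtn) e1 /chi.
    by rewrite !mulrA mulfV // mul1r mulrC.
  by rewrite E sum_Dh_zero // !mulr0.
move=> n _; split; first exact: step.
elim: n => [|n IH] //; by rewrite step.
Qed.
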